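(* With the notation of the context, $$|S|\lesssim\min\Big(N_3^{2-\alpha}\log(2+N_1\vee N_2)\,(N_1\wedge N_2)+N_1N_2,\ \ N_1^{2-\alpha}\log(2+N_2\vee N_3)\,(N_2\wedge N_3)+N_2N_3\Big).$$
   Context: Fix $\alpha\in(1,2)$, dyadic numbers $1\le N_1,N_2,N_3\le N$, a real number $m$ and a constant $C_0>0$. Let $S$ be the set of $(k,k_1,k_2,k_3)\in\mathbb Z^4$ with $k=k_1-k_2+k_3$, $k_2\notin\{k_1,k_3\}$, $\big||k_1|^\alpha-|k_2|^\alpha+|k_3|^\alpha-|k|^\alpha-m\big|\le C_0$, $|k|\le N$ and $|k_j|\le N_j$ for $j=1,2,3$. $|A|$ is cardinality, $a\wedge b=\min(a,b)$, $a\vee b=\max(a,b)$. $A\lesssim B$ means $A\le CB$ with $C$ depending only on $\alpha$ and $C_0$. *)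

(* Defs.v *)
From Stdlib Require Import Reals ZArith List Lra Lia.
Import ListNotations.
Open Scope R_scope.

(* |z|^a for an integer z, with the convention 0^a = 0 (a > 0). *)
Definition apow (a : R) (z : Z) : R :=
  if Z.eq_dec z 0 then 0 else Rpower (Rabs (IZR z)) a.

Definition zrange (M : Z) : list Z :=
  map (fun n => (Z.of_nat n - M)%Z) (seq 0 (Z.to_nat (2 * M + 1))).

Definition inS (a m C0 : R) (N N1 N2 N3 : Z) (q : Z * Z * Z * Z) : bool :=
  let '(k, k1, k2, k3) := q in
  (Z.eqb k (k1 - k2 + k3)%Z)
  && negb (Z.eqb k2 k1) && negb (Z.eqb k2 k3)
  && (if Rle_dec (Rabs (apow a k1 - apow a k2 + apow a k3 - apow a k - m)) C0
      then true else false)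
  && Z.leb (Z.abs k) N && Z.leb (Z.abs k1) N1
  && Z.leb (Z.abs k2) N2 && Z.leb (Z.abs k3) N3.

Definition box (N N1 N2 N3 : Z) : list (Z * Z * Z * Z) :=
  flat_map (fun k => flat_map (fun k1 => flat_map (fun k2 =>
    map (fun k3 => (k, k1, k2, k3)) (zrange N3)) (zrange N2)) (zrange N1))
    (zrange N).

(* |S|: every element of S lies in the box, and the box list has no
   duplicates, so this is the cardinality of S. *)
Definition cardS (a m C0 : R) (N N1 N2 N3 : Z) : nat :=
  length (filter (inS a m C0 N N1 N2 N3) (box N N1 N2 N3)).

(* Main.v *)
Require Import Defs.
From Stdlib Require Import Reals ZArith List Lra Lia Bool.
Import ListNotations.
Open Scope R_scope.

Definition sumR {A} (f : A -> R) (l : list A) : R :=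
  fold_right (fun x acc => f x + acc) 0 l.

Lemma sumR_app {A} (f : A -> R) l1 l2 : sumR f (l1 ++ l2) = sumR f l1 + sumR f l2.
Proof. induction l1; simpl; [lra| rewrite IHl1; lra]. Qed.

Lemma sumR_le {A} (f g : A -> R) l :
  (forall x, In x l -> f x <= g x) -> sumR f l <= sumR g l.
Proof.
  induction l; simpl; intros H; [lra|].
  assert (f a <= g a) by auto. assert (sumR f l <= sumR g l) by auto. lra.
Qed.

Lemma sumR_nonneg {A} (f : A -> R) l : (forall x, 0 <= f x) -> 0 <= sumR f l.
Proof. intros H; induction l; simpl; [lra|]. specialize (H a); lra. Qed.

Lemma sumR_plus {A} (f g : A -> R) l :
  sumR (fun x => f x + g x) l = sumR f l + sumR g l.
Proof. induction l; simpl; [lra| rewrite IHl; lra]. Qed.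

Lemma sumR_scal {A} (c : R) (f : A -> R) l :
  sumR (fun x => c * f x) l = c * sumR f l.
Proof. induction l; simpl; [lra| rewrite IHl; lra]. Qed.

Lemma sumR_const {A} (c : R) (l : list A) :
  sumR (fun _ => c) l = c * INR (length l).
Proof. induction l; simpl length; [simpl; lra|]. rewrite S_INR. simpl. rewrite IHl. lra. Qed.

Lemma sumR_swap {A B} (F : A -> B -> R) l1 l2 :
  sumR (fun x => sumR (fun y => F x y) l2) l1 = sumR (fun y => sumR (fun x => F x y) l1) l2.
Proof.
  induction l1; simpl.
  - induction l2; simpl; lra.
  - rewrite IHl1. rewrite <- sumR_plus. reflexivity.
Qed.

Lemma sumR_map {A B} (f : B -> R) (g : A -> B) l : sumR f (map g l) = sumR (fun x => f (g x)) l.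
Proof. induction l; simpl; [lra| rewrite IHl; lra]. Qed.

Lemma sumR_incl {A} (f : A -> R) l1 l2 :
  NoDup l1 -> incl l1 l2 -> (forall x, 0 <= f x) -> sumR f l1 <= sumR f l2.
Proof.
  intros Hnd; revert l2; induction Hnd as [|a l1 Hna Hnd IH]; intros l2 Hinc Hf.
  - simpl. apply sumR_nonneg; auto.
  - assert (Ha : In a l2) by (apply Hinc; left; auto).
    destruct (in_split _ _ Ha) as [l2a [l2b ->]].
    rewrite sumR_app. simpl.
    assert (sumR f l1 <= sumR f (l2a ++ l2b)).
    { apply IH; auto. intros x Hx. assert (Hx2 : In x (l2a ++ a :: l2b)) by (apply Hinc; right; auto).
      apply in_app_or in Hx2. apply in_or_app. destruct Hx2 as [H|[H|H]]; auto.
      subst; contradiction. }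
    rewrite sumR_app in H. lra.
Qed.

Lemma length_flat_map_INR {A B} (f : A -> list B) l :
  INR (length (flat_map f l)) = sumR (fun x => INR (length (f x))) l.
Proof. induction l; simpl; [reflexivity|]. rewrite length_app, plus_INR, IHl. reflexivity. Qed.

Lemma NoDup_map_inj {A B} (f : A -> B) l :
  (forall x y, f x = f y -> x = y) -> NoDup l -> NoDup (map f l).
Proof.
  intros Hi Hn; induction Hn; simpl; constructor; auto.
  intros Hin. apply in_map_iff in Hin. destruct Hin as [y [Hy Hy2]].
  apply Hi in Hy; subst; contradiction.
Qed.

Lemma NoDup_flat_map {A B} (f : A -> list B) l :
  NoDup l -> (forall x, NoDup (f x)) ->
  (forall x y z, x <> y -> In z (f x) -> In z (f y) -> False) ->
  NoDup (flat_map f l).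
Proof.
  intros Hn Hf Hd; induction Hn as [|a l Hna Hn IH]; simpl; [constructor|].
  apply NoDup_app; auto.
  intros z Hz Hz2. apply in_flat_map in Hz2. destruct Hz2 as [y [Hy Hzy]].
  apply (Hd a y z); auto. intro; subst; contradiction.
Qed.

Lemma In_zrange M z : In z (zrange M) <-> (-M <= z <= M)%Z.
Proof.
  unfold zrange. rewrite in_map_iff. split.
  - intros [n [Hn Hin]]. apply in_seq in Hin.
    lia.
  - intros H. exists (Z.to_nat (z + M)). split. { rewrite Z2Nat.id by lia. lia. }
    apply in_seq. split; [lia|]. apply Nat2Z.inj_lt. rewrite Nat2Z.inj_add.
    rewrite !Z2Nat.id by lia. lia.
Qed.

Lemma NoDup_zrange M : NoDup (zrange M).
Proof. unfold zrange. apply NoDup_map_inj; [intros; lia| apply seq_NoDup]. Qed.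

Lemma length_zrange M : length (zrange M) = Z.to_nat (2 * M + 1).
Proof. unfold zrange. rewrite length_map, length_seq. reflexivity. Qed.

Lemma dshift (g : R -> R) t l : derivable_pt_lim g (t + 1) l ->
  derivable_pt_lim (fun x => g (x + 1)) t l.
Proof.
  intros H.
  assert (H1 : derivable_pt_lim (fun x => x + 1) t 1).
  { pose proof (derivable_pt_lim_plus id (fct_cte 1) t 1 0 (derivable_pt_lim_id t) (derivable_pt_lim_const 1 t)) as H0.
    replace (1+0) with 1 in H0 by ring. exact H0. }
  replace l with (l * 1) by ring.
  apply (derivable_pt_lim_comp (fun x => x + 1) g); auto.
Qed.

Lemma Rpower_lower_neg (x y b : R) : 0 < x -> x <= y -> 0 <= b ->
  Rpower y (- b) <= Rpower x (- b).
Proof.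
  intros Hx Hxy Hb. rewrite !Rpower_Ropp.
  apply Rinv_le_contravar. { unfold Rpower; apply exp_pos. }
  apply Rle_Rpower_l; lra.
Qed.

Lemma second_diff_real (a s : R) : 1 < a -> a < 2 -> 1 <= s ->
  Rpower (s+2) a - 2 * Rpower (s+1) a + Rpower s a >= a * (a-1) * Rpower (s+2) (a-2).
Proof.
  intros Ha Ha2 Hs.
  destruct (MVT_cor2 (fun t => Rpower (t+1) a - Rpower t a)
      (fun t => a * Rpower (t+1) (a-1) - a * Rpower t (a-1)) s (s+1)) as [xi [Hxi Hxr]].
  { lra. }
  { intros c Hc. apply (derivable_pt_lim_minus (fun t => Rpower (t+1) a) (fun t => Rpower t a)).
    - apply (dshift (fun t => Rpower t a)). apply derivable_pt_lim_power; lra.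
    - apply derivable_pt_lim_power; lra. }
  destruct (MVT_cor2 (fun t => Rpower t (a-1)) (fun t => (a-1) * Rpower t (a-1-1)) xi (xi+1))
    as [eta [Heta Hetr]].
  { lra. }
  { intros c Hc. apply derivable_pt_lim_power; lra. }
  replace (s+1+1) with (s+2) in Hxi by ring.
  replace (Rpower (s+2) a - 2 * Rpower (s+1) a + Rpower s a) with
    (Rpower (s + 2) a - Rpower (s+1) a - (Rpower (s+1) a - Rpower s a)) by ring.
  rewrite Hxi. replace (s+1-s) with 1 by ring.
  replace (a * Rpower (xi + 1) (a - 1) - a * Rpower xi (a - 1)) with
    (a * (Rpower (xi + 1) (a - 1) - Rpower xi (a - 1))) by ring.
  rewrite Heta. replace (xi+1-xi) with 1 by ring. replace (a-1-1) with (-(2-a)) by ring.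
  replace (a-2) with (-(2-a)) by ring.
  assert (Rpower (s+2) (-(2-a)) <= Rpower eta (-(2-a))).
  { apply Rpower_lower_neg; lra. }
  assert (0 < a * (a-1)) by nra.
  apply Rle_ge. replace (a * ((a - 1) * Rpower eta (- (2 - a)) * 1) * 1) with (a*(a-1) * Rpower eta (- (2 - a))) by ring.
  apply Rmult_le_compat_l; lra.
Qed.

Lemma apow_neg a z : apow a (- z) = apow a z.
Proof.
  unfold apow. destruct (Z.eq_dec (-z) 0); destruct (Z.eq_dec z 0); try lia; auto.
  rewrite opp_IZR, Rabs_Ropp. reflexivity.
Qed.

Lemma apow_pos a z : (0 < z)%Z -> apow a z = Rpower (IZR z) a.
Proof.
  intros H. unfold apow. destruct (Z.eq_dec z 0); [lia|].
  rewrite Rabs_right; auto. apply Rle_ge, IZR_le; lia.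
Qed.

Lemma apow_0 a : apow a 0 = 0.
Proof. reflexivity. Qed.

Lemma Rpower_1_base y : Rpower 1 y = 1.
Proof. unfold Rpower. rewrite ln_1, Rmult_0_r, exp_0. reflexivity. Qed.

Lemma apow_1 a : apow a 1 = 1.
Proof. rewrite apow_pos by lia. apply Rpower_1_base. Qed.

Lemma Rpower_pos x y : 0 < Rpower x y.
Proof. unfold Rpower; apply exp_pos. Qed.

Definition Ed a s := apow a (s+2) - 2 * apow a (s+1) + apow a s.
Definition cc a := Rmin (a*(a-1)) (Rpower 2 a - 2).

Lemma cc_pos a : 1 < a -> 0 < cc a.
Proof.
  intros H. unfold cc. apply Rmin_glb_lt. nra.
  assert (Rpower 2 1 < Rpower 2 a) by (apply Rpower_lt; lra).
  rewrite Rpower_1 in H0 by lra. lra.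
Qed.

Lemma Rpower_neg_le1 x b : 1 <= x -> 0 <= b -> Rpower x (-b) <= 1.
Proof.
  intros. rewrite <- (Rpower_1_base (-b)). apply Rpower_lower_neg; lra.
Qed.

Lemma Ed_pos a s : 1 < a -> a < 2 -> (1 <= s)%Z -> Ed a s >= a*(a-1) * Rpower (IZR s + 2) (a-2).
Proof.
  intros. unfold Ed. rewrite !apow_pos by lia. rewrite !plus_IZR.
  apply second_diff_real; auto. apply IZR_le in H1. auto.
Qed.

Lemma Ed_bound a M s : 1 < a -> a < 2 -> (0 <= M)%Z -> (-M <= s <= M)%Z ->
  Ed a s >= cc a * Rpower (IZR M + 2) (a-2).
Proof.
  intros Ha Ha2 HM Hs.
  assert (HM' : 0 <= IZR M) by (apply IZR_le; lia).
  assert (Hr1 : Rpower (IZR M + 2) (a-2) <= 1).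
  { replace (a-2) with (-(2-a)) by ring. apply Rpower_neg_le1; lra. }
  assert (Hr0 := Rpower_pos (IZR M + 2) (a-2)).
  assert (Hcc := cc_pos a Ha).
  assert (Hca : cc a <= a*(a-1)) by apply Rmin_l.
  assert (Hcb : cc a <= Rpower 2 a - 2) by apply Rmin_r.
  assert (Hmono : forall t, (1 <= t <= M)%Z ->
     Ed a t >= cc a * Rpower (IZR M + 2) (a-2)).
  { intros t Ht. pose proof (Ed_pos a t Ha Ha2 (proj1 Ht)).
    assert (Rpower (IZR M + 2) (a-2) <= Rpower (IZR t + 2) (a-2)).
    { assert (IZR t <= IZR M) by (apply IZR_le; lia).
      assert (1 <= IZR t) by (apply IZR_le; lia).
      replace (a-2) with (-(2-a)) by ring. apply Rpower_lower_neg; lra. }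
    assert (cc a * Rpower (IZR M + 2) (a-2) <= a*(a-1) * Rpower (IZR t + 2) (a-2)).
    { apply Rmult_le_compat; lra. }
    lra. }
  assert (Hp2 : apow a 2 = Rpower 2 a) by (rewrite apow_pos by lia; reflexivity).
  assert (Hm1 : apow a (-1) = 1) by (transitivity (apow a 1); [apply (apow_neg a 1)| apply apow_1]).
  assert (Hm2 : apow a (-2) = Rpower 2 a) by (transitivity (apow a 2); [apply (apow_neg a 2)| auto]).
  assert (Hsmall : cc a * Rpower (IZR M + 2) (a-2) <= cc a).
  { assert (cc a * Rpower (IZR M + 2) (a-2) <= cc a * 1) by (apply Rmult_le_compat_l; lra). lra. }
  destruct (Z_le_gt_dec 1 s).
  - apply Hmono; lia.
  - destruct (Z_le_gt_dec s (-3)).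
    + assert (Ed a s = Ed a (-s-2)).
      { unfold Ed.
        assert (E1 : apow a (s+2) = apow a (-s-2)) by (rewrite <- apow_neg; f_equal; ring).
        assert (E2 : apow a (s+1) = apow a (-s-2+1)) by (rewrite <- apow_neg; f_equal; ring).
        assert (E3 : apow a s = apow a (-s-2+2)) by (rewrite <- apow_neg; f_equal; ring).
        rewrite E1, E2, E3. ring. }
      rewrite H. apply Hmono; lia.
    + assert (Hc : (s = 0 \/ s = -1 \/ s = -2)%Z) by lia. destruct Hc as [Hc|[Hc|Hc]]; subst s; unfold Ed; simpl.
      * rewrite Hp2, apow_1, apow_0. lra.
      * rewrite apow_1, apow_0, Hm1. assert (a*(a-1) < 2) by nra. lra.
      * rewrite apow_0, Hm1, Hm2. lra.
Qed.

Definition dd a t := apow a (t+1) - apow a t.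
Definition GG a h u := apow a u - apow a (u + h).
Definition beta a M := cc a * Rpower (IZR M + 2) (a-2).

Lemma beta_pos a M : 1 < a -> 0 < beta a M.
Proof. intros. unfold beta. apply Rmult_lt_0_compat; [apply cc_pos; auto| apply Rpower_pos]. Qed.

Lemma dd_incr a M : 1 < a -> a < 2 -> (0 <= M)%Z -> forall (h : nat) t,
  (-M <= t)%Z -> (t + Z.of_nat h - 1 <= M)%Z ->
  dd a (t + Z.of_nat h) - dd a t >= INR h * beta a M.
Proof.
  intros Ha Ha2 HM h. induction h; intros t H1 H2.
  - simpl. replace (t+0)%Z with t by ring. lra.
  - rewrite Nat2Z.inj_succ, S_INR.
    assert (IH := IHh t H1 ltac:(lia)).
    assert (HE := Ed_bound a M (t + Z.of_nat h) Ha Ha2 HM ltac:(lia)).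
    assert (Ed a (t + Z.of_nat h) = dd a (t + Z.succ (Z.of_nat h)) - dd a (t + Z.of_nat h)).
    { unfold Ed, dd. replace (t + Z.succ (Z.of_nat h) + 1)%Z with (t + Z.of_nat h + 2)%Z by ring.
      replace (t + Z.succ (Z.of_nat h))%Z with (t + Z.of_nat h + 1)%Z by ring. ring. }
    unfold beta in *. lra.
Qed.

Lemma GG_decr a M (hn : nat) : 1 < a -> a < 2 -> (0 <= M)%Z -> forall (n : nat) u,
  (-M <= u)%Z -> (u + Z.of_nat n + Z.of_nat hn - 2 <= M)%Z ->
  GG a (Z.of_nat hn) u - GG a (Z.of_nat hn) (u + Z.of_nat n) >= INR n * INR hn * beta a M.
Proof.
  intros Ha Ha2 HM n. induction n; intros u H1 H2.
  - simpl. replace (u+0)%Z with u by ring. lra.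
  - rewrite Nat2Z.inj_succ, S_INR.
    assert (IH := IHn u H1 ltac:(lia)).
    assert (HD := dd_incr a M Ha Ha2 HM hn (u + Z.of_nat n) ltac:(lia) ltac:(lia)).
    assert (GG a (Z.of_nat hn) (u + Z.of_nat n) - GG a (Z.of_nat hn) (u + Z.succ (Z.of_nat n))
            = dd a (u + Z.of_nat n + Z.of_nat hn) - dd a (u + Z.of_nat n)).
    { unfold GG, dd. replace (u + Z.succ (Z.of_nat n))%Z with (u + Z.of_nat n + 1)%Z by ring.
      replace (u + Z.of_nat n + 1 + Z.of_nat hn)%Z with (u + Z.of_nat n + Z.of_nat hn + 1)%Z by ring.
      ring. }
    assert (0 < beta a M) by (apply beta_pos; auto).
    nra.
Qed.

Lemma GG_gap a M3 h x y : 1 < a -> a < 2 -> (0 <= M3)%Z -> h <> 0%Z ->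
  (-M3 <= x)%Z -> (x < y)%Z -> (y <= M3)%Z ->
  Rabs (GG a h x - GG a h y) >= IZR (y - x) * IZR (Z.abs h) * beta a (M3 + Z.abs h).
Proof.
  intros Ha Ha2 HM Hh H1 H2 H3.
  set (n := Z.to_nat (y - x)).
  assert (Hn : Z.of_nat n = (y - x)%Z) by (unfold n; lia).
  set (hn := Z.to_nat (Z.abs h)).
  assert (Hhn : Z.of_nat hn = Z.abs h) by (unfold hn; lia).
  assert (Hb := beta_pos a (M3 + Z.abs h) Ha).
  replace (IZR (y - x)) with (INR n) by (rewrite INR_IZR_INZ, Hn; reflexivity).
  replace (IZR (Z.abs h)) with (INR hn) by (rewrite INR_IZR_INZ, Hhn; reflexivity).
  destruct (Z_lt_le_dec 0 h).
  - assert (Z.abs h = h) by lia.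
    pose proof (GG_decr a (M3 + Z.abs h) hn Ha Ha2 ltac:(lia) n x ltac:(lia) ltac:(lia)) as G.
    rewrite Hhn, H, Hn in G. rewrite H in Hb |- *. replace (x + (y-x))%Z with y in G by ring.
    assert (0 <= INR n * INR hn * beta a (M3 + h)).
    { apply Rmult_le_pos; [apply Rmult_le_pos; apply pos_INR| lra]. }
    rewrite Rabs_right by lra. lra.
  - assert (Z.abs h = (-h)%Z) by lia.
    pose proof (GG_decr a (M3 + Z.abs h) hn Ha Ha2 ltac:(lia) n (x + h) ltac:(lia) ltac:(lia)) as G.
    rewrite Hhn in G.
    assert (E1 : GG a (Z.abs h) (x + h) = - GG a h x).
    { unfold GG. rewrite H. replace (x + h + - h)%Z with x by ring. ring. }
    assert (E2 : GG a (Z.abs h) (x + h + Z.of_nat n) = - GG a h y).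
    { unfold GG. rewrite H, Hn. replace (x + h + (y - x) + - h)%Z with y by ring.
      replace (x + h + (y - x))%Z with (y + h)%Z by ring. ring. }
    rewrite E1, E2 in G.
    assert (0 <= INR n * INR hn * beta a (M3 + Z.abs h)).
    { apply Rmult_le_pos; [apply Rmult_le_pos; apply pos_INR| lra]. }
    rewrite Rabs_left1 by lra. lra.
Qed.

Definition Qb a m C0 A B x : bool :=
  if Rle_dec (Rabs (apow a A - apow a B + apow a x - apow a (A - B + x) - m)) C0
  then true else false.

Lemma Rabs_le_pair c u v C0 : Rabs (c + u) <= C0 -> Rabs (c + v) <= C0 -> Rabs (u - v) <= 2 * C0.
Proof.
  unfold Rabs; repeat destruct Rcase_abs; lra.
Qed.

Lemma gap_sym a M3 h x y : 1 < a -> a < 2 -> (0 <= M3)%Z -> h <> 0%Z ->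
  (-M3 <= x <= M3)%Z -> (-M3 <= y <= M3)%Z ->
  IZR (Z.abs (y - x)) * IZR (Z.abs h) * beta a (M3 + Z.abs h) <= Rabs (GG a h x - GG a h y).
Proof.
  intros. destruct (Z_lt_le_dec x y).
  - rewrite Z.abs_eq by lia. apply Rge_le, GG_gap; auto; lia.
  - destruct (Z.eq_dec x y).
    + subst. rewrite Z.sub_diag. simpl. rewrite Rmult_0_l, Rmult_0_l. apply Rabs_pos.
    + rewrite Z.abs_neq by lia. rewrite Rabs_minus_sym.
      replace (- (y - x))%Z with (x - y)%Z by ring. apply Rge_le, GG_gap; auto; lia.
Qed.

Definition K3 a C0 := 3 + 8 * C0 / cc a.
Definition K1 a C0 := 24 * C0 / cc a.

Lemma rp_le_self x t : 1 <= x -> 0 <= t <= 1 -> Rpower x t <= x.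
Proof.
  intros. rewrite <- (Rpower_1 x) at 2 by lra. apply Rle_Rpower; lra.
Qed.

Lemma r_bound a C0 M h : 1 < a -> a < 2 -> 0 < C0 -> (1 <= M)%Z -> h <> 0%Z ->
  2 * (2 * C0 / (IZR (Z.abs h) * beta a (M + Z.abs h))) <=
  8 * C0 / cc a + 24 * C0 / cc a * Rpower (IZR M) (2-a) / IZR (Z.abs h).
Proof.
  intros Ha Ha2 HC HM Hh.
  assert (Hcc := cc_pos a Ha).
  assert (HMr : 1 <= IZR M) by (apply IZR_le; lia).
  assert (Hhr : 1 <= IZR (Z.abs h)) by (apply IZR_le; lia).
  set (H := IZR (Z.abs h)) in *. set (Mr := IZR M) in *.
  unfold beta. rewrite plus_IZR. fold H Mr.
  set (th := 2 - a).
  replace (a - 2) with (- th) by (unfold th; ring). rewrite Rpower_Ropp.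
  set (P := Rpower (Mr + H + 2) th).
  assert (HP : 0 < P) by apply Rpower_pos.
  assert (Hth : 0 <= th <= 1) by (unfold th; lra).
  assert (Hpm : 0 < Rpower Mr th) by apply Rpower_pos.
  assert (Key : P <= 6 * Rpower Mr th + 2 * H).
  { destruct (Rle_dec H (3 * Mr)).
    - assert (P <= Rpower (6 * Mr) th) by (apply Rle_Rpower_l; lra).
      rewrite <- Rpower_mult_distr in H0 by lra.
      assert (Rpower 6 th <= 6) by (apply rp_le_self; lra). nra.
    - assert (P <= Rpower (2 * H) th) by (apply Rle_Rpower_l; lra).
      rewrite <- Rpower_mult_distr in H0 by lra.
      assert (Rpower 2 th <= 2) by (apply rp_le_self; lra).
      assert (Rpower H th <= H) by (apply rp_le_self; lra).
      assert (0 < Rpower H th) by apply Rpower_pos.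
      assert (0 < Rpower 2 th) by apply Rpower_pos. nra. }
  replace (2 * (2 * C0 / (H * (cc a * / P)))) with (4 * C0 / cc a * P / H)
    by (field; repeat split; lra).
  replace (8 * C0 / cc a + 24 * C0 / cc a * Rpower Mr th / H) with
    (4 * C0 / cc a * (6 * Rpower Mr th + 2 * H) / H) by (field; lra).
  unfold Rdiv. apply Rmult_le_compat_r. { left; apply Rinv_0_lt_compat; lra. }
  apply Rmult_le_compat_l; [|exact Key].
  apply Rmult_le_pos; [lra| left; apply Rinv_0_lt_compat; lra].
Qed.

Lemma count_bound a m C0 M A B : 1 < a -> a < 2 -> 0 < C0 -> (1 <= M)%Z -> A <> B ->
  INR (length (filter (Qb a m C0 A B) (zrange M))) <=
  K3 a C0 + K1 a C0 * Rpower (IZR M) (2-a) / IZR (Z.abs (A - B)).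
Proof.
  intros Ha Ha2 HC HM HAB.
  set (h := (A - B)%Z). assert (Hh : h <> 0%Z) by (unfold h; lia).
  assert (Hcc := cc_pos a Ha).
  assert (Hhr : 1 <= IZR (Z.abs h)) by (apply IZR_le; lia).
  assert (Hb := beta_pos a (M + Z.abs h) Ha).
  assert (HRHS : 3 + (8 * C0 / cc a + 24 * C0 / cc a * Rpower (IZR M) (2-a) / IZR (Z.abs h))
     <= K3 a C0 + K1 a C0 * Rpower (IZR M) (2-a) / IZR (Z.abs h)).
  { unfold K3, K1. lra. }
  assert (Hr := r_bound a C0 M h Ha Ha2 HC HM Hh).
  set (r := 2 * C0 / (IZR (Z.abs h) * beta a (M + Z.abs h))) in *.
  assert (Hr0 : 0 < r) by (unfold r; apply Rdiv_lt_0_compat; [lra| apply Rmult_lt_0_compat; lra]).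
  set (F := filter (Qb a m C0 A B) (zrange M)).
  destruct F as [|x0 F'] eqn:EF.
  - simpl. assert (0 <= 24 * C0 / cc a * Rpower (IZR M) (2 - a) / IZR (Z.abs h)).
    { unfold Rdiv. apply Rmult_le_pos; [apply Rmult_le_pos; [apply Rmult_le_pos; [lra| left; apply Rinv_0_lt_compat; lra]| left; apply Rpower_pos]| left; apply Rinv_0_lt_compat; lra]. }
    assert (0 <= 8 * C0 / cc a) by (unfold Rdiv; apply Rmult_le_pos; [lra| left; apply Rinv_0_lt_compat; lra]).
    lra.
  - rewrite <- EF.
    assert (Hx0 : In x0 F) by (rewrite EF; left; auto).
    assert (Hmem : forall y, In y F -> (-M <= y <= M)%Z /\
       Rabs (apow a A - apow a B - m + GG a h y) <= C0).
    { intros y Hy. unfold F in Hy. apply filter_In in Hy. destruct Hy as [Hy1 Hy2].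
      split. { apply In_zrange; auto. }
      unfold Qb in Hy2. destruct Rle_dec as [Hle|]; [|discriminate].
      unfold GG, h. replace (y + (A - B))%Z with (A - B + y)%Z by ring.
      replace (apow a A - apow a B - m + (apow a y - apow a (A - B + y))) with
        (apow a A - apow a B + apow a y - apow a (A - B + y) - m) by ring. exact Hle. }
    assert (Hclose : forall y, In y F -> (Z.abs (y - x0) < up r)%Z).
    { intros y Hy. destruct (Hmem y Hy) as [Hy1 Hy2]. destruct (Hmem x0 Hx0) as [Hx1 Hx2].
      pose proof (gap_sym a M h x0 y Ha Ha2 ltac:(lia) Hh Hx1 Hy1) as G.
      pose proof (Rabs_le_pair _ _ _ _ Hx2 Hy2) as G2.
      assert (IZR (Z.abs (y - x0)) <= r).
      { unfold r. apply Rmult_le_reg_r with (IZR (Z.abs h) * beta a (M + Z.abs h)).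
        { apply Rmult_lt_0_compat; lra. }
        unfold Rdiv. rewrite Rmult_assoc, Rinv_l by (apply Rgt_not_eq, Rmult_lt_0_compat; lra).
        lra. }
      destruct (archimed r). apply lt_IZR. lra. }
    assert (Hinc : incl F (map (fun z => (x0 + z)%Z) (zrange (up r)))).
    { intros y Hy. apply in_map_iff. exists (y - x0)%Z. split; [ring|].
      apply In_zrange. specialize (Hclose y Hy). lia. }
    assert (HnF : NoDup F) by (apply NoDup_filter, NoDup_zrange).
    pose proof (NoDup_incl_length HnF Hinc) as Hlen.
    rewrite length_map, length_zrange in Hlen.
    apply le_INR in Hlen.
    destruct (archimed r).
    assert (Hup : (0 <= up r)%Z) by (apply le_IZR; lra).
    rewrite (INR_IZR_INZ (Z.to_nat _)), Z2Nat.id in Hlen by lia.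
    rewrite plus_IZR, mult_IZR in Hlen.
    lra.
Qed.

Lemma In_box N N1 N2 N3 k k1 k2 k3 : In (k, k1, k2, k3) (box N N1 N2 N3) ->
  (-N <= k <= N)%Z.
Proof.
  unfold box. intros H. apply in_flat_map in H. destruct H as [x [Hx H]].
  apply in_flat_map in H. destruct H as [y [Hy H]].
  apply in_flat_map in H. destruct H as [z [Hz H]].
  apply in_map_iff in H. destruct H as [w [Hw H]]. inversion Hw; subst.
  apply In_zrange; auto.
Qed.

Lemma NoDup_box N N1 N2 N3 : NoDup (box N N1 N2 N3).
Proof.
  unfold box. apply NoDup_flat_map; [apply NoDup_zrange| |].
  2:{ intros x y q Hxy H1 H2. cbv beta in H1, H2.
      repeat (apply in_flat_map in H1; destruct H1 as [? [_ H1]]).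
      repeat (apply in_flat_map in H2; destruct H2 as [? [_ H2]]).
      apply in_map_iff in H1, H2. destruct H1 as [? [<- _]]. destruct H2 as [? [E _]].
      inversion E. congruence. }
  intros k. apply NoDup_flat_map; [apply NoDup_zrange| |].
  2:{ intros x y q Hxy H1 H2. cbv beta in H1, H2.
      repeat (apply in_flat_map in H1; destruct H1 as [? [_ H1]]).
      repeat (apply in_flat_map in H2; destruct H2 as [? [_ H2]]).
      apply in_map_iff in H1, H2. destruct H1 as [? [<- _]]. destruct H2 as [? [E _]].
      inversion E. congruence. }
  intros k1. apply NoDup_flat_map; [apply NoDup_zrange| |].
  2:{ intros x y q Hxy H1 H2. cbv beta in H1, H2.
      apply in_map_iff in H1, H2. destruct H1 as [? [<- _]]. destruct H2 as [? [E _]].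
      inversion E. congruence. }
  intros k2. apply NoDup_map_inj; [| apply NoDup_zrange].
  intros x y E. inversion E. auto.
Qed.

Definition L1 a m C0 N1 N2 N3 :=
  flat_map (fun k1 => flat_map (fun k2 =>
    if Z.eq_dec k1 k2 then [] else
    map (fun k3 => ((k1 - k2 + k3)%Z, k1, k2, k3)) (filter (Qb a m C0 k1 k2) (zrange N3)))
    (zrange N2)) (zrange N1).

Definition L2 a m C0 N1 N2 N3 :=
  flat_map (fun k3 => flat_map (fun k2 =>
    if Z.eq_dec k3 k2 then [] else
    map (fun k1 => ((k1 - k2 + k3)%Z, k1, k2, k3)) (filter (Qb a m C0 k3 k2) (zrange N1)))
    (zrange N2)) (zrange N3).

Lemma inS_unpack a m C0 N N1 N2 N3 k k1 k2 k3 :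
  inS a m C0 N N1 N2 N3 (k, k1, k2, k3) = true ->
  k = (k1 - k2 + k3)%Z /\ k2 <> k1 /\ k2 <> k3 /\
  Rabs (apow a k1 - apow a k2 + apow a k3 - apow a k - m) <= C0 /\
  (-N1 <= k1 <= N1)%Z /\ (-N2 <= k2 <= N2)%Z /\ (-N3 <= k3 <= N3)%Z.
Proof.
  unfold inS. intros H.
  repeat rewrite andb_true_iff in H.
  destruct H as [[[[[[[H1 H2] H3] H4] H5] H6] H7] H8].
  apply Z.eqb_eq in H1. apply negb_true_iff, Z.eqb_neq in H2. apply negb_true_iff, Z.eqb_neq in H3.
  destruct Rle_dec; [|discriminate].
  apply Z.leb_le in H6, H7, H8. repeat split; auto; lia.
Qed.

Lemma card_L1 a m C0 N N1 N2 N3 :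
  (cardS a m C0 N N1 N2 N3 <= length (L1 a m C0 N1 N2 N3))%nat.
Proof.
  unfold cardS. apply NoDup_incl_length. { apply NoDup_filter, NoDup_box. }
  intros [[[k k1] k2] k3] Hq. apply filter_In in Hq. destruct Hq as [_ Hq].
  apply inS_unpack in Hq. destruct Hq as [Hk [H21 [H23 [Hr [R1 [R2 R3]]]]]].
  unfold L1. apply in_flat_map. exists k1. split; [apply In_zrange; auto|].
  apply in_flat_map. exists k2. split; [apply In_zrange; auto|].
  destruct (Z.eq_dec k1 k2); [congruence|].
  apply in_map_iff. exists k3. split; [subst; reflexivity|].
  apply filter_In. split; [apply In_zrange; auto|].
  unfold Qb. subst k. destruct Rle_dec; auto.
Qed.

Lemma card_L2 a m C0 N N1 N2 N3 :
  (cardS a m C0 N N1 N2 N3 <= length (L2 a m C0 N1 N2 N3))%nat.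
Proof.
  unfold cardS. apply NoDup_incl_length. { apply NoDup_filter, NoDup_box. }
  intros [[[k k1] k2] k3] Hq. apply filter_In in Hq. destruct Hq as [_ Hq].
  apply inS_unpack in Hq. destruct Hq as [Hk [H21 [H23 [Hr [R1 [R2 R3]]]]]].
  unfold L2. apply in_flat_map. exists k3. split; [apply In_zrange; auto|].
  apply in_flat_map. exists k2. split; [apply In_zrange; auto|].
  destruct (Z.eq_dec k3 k2); [congruence|].
  apply in_map_iff. exists k1. split; [subst; reflexivity|].
  apply filter_In. split; [apply In_zrange; auto|].
  unfold Qb. subst k. replace (k3 - k2 + k1)%Z with (k1 - k2 + k3)%Z by ring.
  destruct Rle_dec as [|n0]; auto. exfalso; apply n0.
  replace (apow a k3 - apow a k2 + apow a k1 - apow a (k1 - k2 + k3) - m) with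
    (apow a k1 - apow a k2 + apow a k3 - apow a (k1 - k2 + k3) - m) by ring. auto.
Qed.

Definition gz (z : Z) : R := if Z.eq_dec z 0 then 0 else / IZR (Z.abs z).

Lemma gz_nonneg z : 0 <= gz z.
Proof.
  unfold gz. destruct Z.eq_dec; [lra|]. left. apply Rinv_0_lt_compat, IZR_lt. lia.
Qed.

Lemma L_gen_bound a m C0 NA N2 NX (Lg : list (Z*Z*Z*Z)) (fL : Z -> Z -> list Z) (mk : Z -> Z -> Z -> Z*Z*Z*Z) :
  1 < a -> a < 2 -> 0 < C0 -> (1 <= NX)%Z ->
  Lg = flat_map (fun A => flat_map (fun B =>
    if Z.eq_dec A B then [] else map (mk A B) (filter (Qb a m C0 A B) (zrange NX))) (zrange N2)) (zrange NA) ->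
  INR (length Lg) <= sumR (fun A => sumR (fun B =>
     K3 a C0 + K1 a C0 * Rpower (IZR NX) (2-a) * gz (A - B)) (zrange N2)) (zrange NA).
Proof.
  intros Ha Ha2 HC HX ->.
  rewrite length_flat_map_INR. apply sumR_le. intros A _.
  rewrite length_flat_map_INR. apply sumR_le. intros B _.
  assert (0 < cc a) by (apply cc_pos; auto).
  assert (0 <= K3 a C0) by (unfold K3; assert (0 <= 8 * C0 / cc a) by (unfold Rdiv; apply Rmult_le_pos; [lra| left; apply Rinv_0_lt_compat; lra]); lra).
  destruct (Z.eq_dec A B).
  - simpl. unfold gz. destruct Z.eq_dec; [|lia]. lra.
  - rewrite length_map. pose proof (count_bound a m C0 NX A B Ha Ha2 HC HX n) as Hc.
    unfold gz. destruct Z.eq_dec; [lia|]. unfold Rdiv in Hc. rewrite Rmult_assoc in Hc |- *. exact Hc.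
Qed.

Lemma ln_le_minus1 x : 0 < x -> ln x <= x - 1.
Proof. intros. pose proof (exp_ineq1_le (ln x)). rewrite exp_ln in H0 by auto. lra. Qed.

Lemma ln_le x y : 0 < x -> x <= y -> ln x <= ln y.
Proof. intros. destruct H0; [left; apply ln_increasing; auto| subst; lra]. Qed.

Lemma harmonic n : (1 <= n)%nat -> sumR (fun k => / INR k) (seq 1 n) <= 1 + ln (INR n).
Proof.
  induction n; intros H; [lia|].
  destruct n.
  - simpl. rewrite ln_1. lra.
  - rewrite seq_S, sumR_app.
    assert (E : sumR (fun k => / INR k) [(1 + S n)%nat] = / (INR (S n) + 1)).
    { unfold sumR. cbn [fold_right]. change (1 + S n)%nat with (S (S n)). rewrite (S_INR (S n)). ring. }
    rewrite E. change (1 + S n)%nat with (S (S n)). rewrite (S_INR (S n)).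
    assert (IH := IHn ltac:(lia)).
    set (x := INR (S n)) in *.
    assert (Hx : 1 <= x) by (unfold x; rewrite S_INR; pose proof (pos_INR n); lra).
    assert (ln (x / (x+1)) <= x/(x+1) - 1) by (apply ln_le_minus1; apply Rdiv_lt_0_compat; lra).
    unfold Rdiv in H0. rewrite ln_mult, ln_Rinv in H0 by (try apply Rinv_0_lt_compat; lra).
    replace (x * / (x+1) - 1) with (- / (x+1)) in H0 by (field; lra).
    lra.
Qed.

Lemma sum_gz_zrange R : (1 <= R)%Z -> sumR gz (zrange R) <= 2 * (1 + ln (IZR R)).
Proof.
  intros HR.
  set (n := Z.to_nat R).
  set (l' := map Z.of_nat (seq 1 n) ++ map (fun k => (- Z.of_nat k)%Z) (seq 1 n) ++ [0%Z]).
  assert (Hinc : incl (zrange R) l').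
  { intros z Hz. apply In_zrange in Hz. unfold l'.
    destruct (Z_lt_le_dec 0 z).
    - apply in_or_app; left. apply in_map_iff. exists (Z.to_nat z). split; [lia|].
      apply in_seq. unfold n. lia.
    - apply in_or_app; right. destruct (Z.eq_dec z 0).
      + apply in_or_app; right. left; auto.
      + apply in_or_app; left. apply in_map_iff. exists (Z.to_nat (-z)). split; [lia|].
        apply in_seq. unfold n. lia. }
  pose proof (sumR_incl gz _ _ (NoDup_zrange R) Hinc gz_nonneg).
  unfold l' in H. rewrite !sumR_app, !sumR_map in H. simpl in H.
  assert (E1 : sumR (fun x => gz (Z.of_nat x)) (seq 1 n) = sumR (fun k => / INR k) (seq 1 n)).
  { apply Rle_antisym; apply sumR_le; intros x Hx; apply in_seq in Hx; unfold gz;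
    destruct Z.eq_dec; try lia; rewrite INR_IZR_INZ; rewrite Z.abs_eq by lia; lra. }
  assert (E2 : sumR (fun x => gz (- Z.of_nat x)) (seq 1 n) = sumR (fun k => / INR k) (seq 1 n)).
  { apply Rle_antisym; apply sumR_le; intros x Hx; apply in_seq in Hx; unfold gz;
    destruct Z.eq_dec; try lia; rewrite INR_IZR_INZ; rewrite Z.abs_neq by lia;
    rewrite Z.opp_involutive; lra. }
  rewrite E1, E2 in H. replace (gz 0) with 0 in H by reflexivity.
  pose proof (harmonic n ltac:(unfold n; lia)).
  replace (INR n) with (IZR R) in H0 by (unfold n; rewrite INR_IZR_INZ, Z2Nat.id by lia; auto).
  lra.
Qed.

Lemma gz_inner_bound NA N2 A : (1 <= NA)%Z -> (1 <= N2)%Z -> (-NA <= A <= NA)%Z ->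
  sumR (fun B => gz (A - B)) (zrange N2) <= 2 * (1 + ln (IZR (NA + N2))).
Proof.
  intros. eapply Rle_trans; [|apply sum_gz_zrange; lia].
  rewrite <- (sumR_map gz (fun B => (A - B)%Z)).
  apply sumR_incl; [| |apply gz_nonneg].
  - apply NoDup_map_inj; [intros; lia| apply NoDup_zrange].
  - intros z Hz. apply in_map_iff in Hz. destruct Hz as [B [<- HB]]. apply In_zrange in HB.
    apply In_zrange. lia.
Qed.

Lemma gz_inner_bound2 NA N2 B : (1 <= NA)%Z -> (1 <= N2)%Z -> (-N2 <= B <= N2)%Z ->
  sumR (fun A => gz (A - B)) (zrange NA) <= 2 * (1 + ln (IZR (NA + N2))).
Proof.
  intros. eapply Rle_trans; [|apply sum_gz_zrange; lia].
  rewrite <- (sumR_map gz (fun A => (A - B)%Z)).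
  apply sumR_incl; [| |apply gz_nonneg].
  - apply NoDup_map_inj; [intros; lia| apply NoDup_zrange].
  - intros z Hz. apply in_map_iff in Hz. destruct Hz as [A [<- HA]]. apply In_zrange in HA.
    apply In_zrange. lia.
Qed.

Lemma sumR_ext {A} (f g : A -> R) l : (forall x, In x l -> f x = g x) -> sumR f l = sumR g l.
Proof. intros H; induction l; simpl; auto. rewrite H by (left; auto). rewrite IHl; auto. intros; apply H; right; auto. Qed.

Lemma double_sum_bound (K3 K1 P : R) NA N2 : 0 <= K3 -> 0 <= K1 -> 0 <= P ->
  (1 <= NA)%Z -> (1 <= N2)%Z ->
  sumR (fun A => sumR (fun B => K3 + K1 * P * gz (A - B)) (zrange N2)) (zrange NA) <=
  K3 * (IZR (2 * NA + 1) * IZR (2 * N2 + 1)) +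
  K1 * P * (2 * (1 + ln (IZR (NA + N2)))) * Rmin (IZR (2 * NA + 1)) (IZR (2 * N2 + 1)).
Proof.
  intros H3 H1 HP HA HB.
  assert (Hlen : forall M, (0 <= M)%Z -> INR (length (zrange M)) = IZR (2 * M + 1)).
  { intros M HM. rewrite length_zrange, INR_IZR_INZ, Z2Nat.id by lia. reflexivity. }
  assert (Hsplit : sumR (fun A => sumR (fun B => K3 + K1 * P * gz (A - B)) (zrange N2)) (zrange NA)
    = K3 * (IZR (2 * NA + 1) * IZR (2 * N2 + 1)) +
      K1 * P * sumR (fun A => sumR (fun B => gz (A - B)) (zrange N2)) (zrange NA)).
  { transitivity (sumR (fun A => K3 * IZR (2 * N2 + 1) + K1 * P * sumR (fun B => gz (A - B)) (zrange N2)) (zrange NA)).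
    - apply sumR_ext. intros A _.
      rewrite sumR_plus, sumR_const, sumR_scal, Hlen by lia. reflexivity.
    - rewrite sumR_plus, sumR_const, sumR_scal, Hlen by lia. ring. }
  rewrite Hsplit.
  set (Lg := 2 * (1 + ln (IZR (NA + N2)))).
  assert (S1 : sumR (fun A => sumR (fun B => gz (A - B)) (zrange N2)) (zrange NA) <= IZR (2 * NA + 1) * Lg).
  { eapply Rle_trans. { apply sumR_le with (g := fun _ => Lg). intros A HAi.
      apply In_zrange in HAi. apply gz_inner_bound; auto. }
    rewrite sumR_const, Hlen by lia. lra. }
  assert (S2 : sumR (fun A => sumR (fun B => gz (A - B)) (zrange N2)) (zrange NA) <= IZR (2 * N2 + 1) * Lg).
  { rewrite (sumR_swap (fun A B => gz (A - B))).
    eapply Rle_trans. { apply sumR_le with (g := fun _ => Lg). intros B HBi.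
      apply In_zrange in HBi. apply gz_inner_bound2; auto. }
    rewrite sumR_const, Hlen by lia. lra. }
  assert (HKP : 0 <= K1 * P) by (apply Rmult_le_pos; auto).
  assert (sumR (fun A => sumR (fun B => gz (A - B)) (zrange N2)) (zrange NA) <= Rmin (IZR (2 * NA + 1)) (IZR (2 * N2 + 1)) * Lg).
  { unfold Rmin. destruct Rle_dec; auto. }
  assert (K1 * P * sumR (fun A => sumR (fun B => gz (A - B)) (zrange N2)) (zrange NA) <=
          K1 * P * (Rmin (IZR (2 * NA + 1)) (IZR (2 * N2 + 1)) * Lg)) by (apply Rmult_le_compat_l; auto).
  lra.
Qed.

Lemma final_gen a C0 NA N2 NX (X : R) : 1 < a -> a < 2 -> 0 < C0 ->
  (1 <= NA)%Z -> (1 <= N2)%Z -> (1 <= NX)%Z ->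
  X <= sumR (fun A => sumR (fun B =>
     K3 a C0 + K1 a C0 * Rpower (IZR NX) (2-a) * gz (A - B)) (zrange N2)) (zrange NA) ->
  X <= (9 * K3 a C0 + 18 * K1 a C0) *
     (Rpower (IZR NX) (2-a) * ln (2 + Rmax (IZR NA) (IZR N2)) * Rmin (IZR NA) (IZR N2) + IZR NA * IZR N2).
Proof.
  intros Ha Ha2 HC HA HB HX HXs.
  assert (Hcc := cc_pos a Ha).
  assert (HK3 : 0 <= K3 a C0).
  { unfold K3; assert (0 <= 8 * C0 / cc a) by (unfold Rdiv; apply Rmult_le_pos; [lra| left; apply Rinv_0_lt_compat; lra]); lra. }
  assert (HK1 : 0 <= K1 a C0).
  { unfold K1; unfold Rdiv; apply Rmult_le_pos; [lra| left; apply Rinv_0_lt_compat; lra]. }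
  set (P := Rpower (IZR NX) (2-a)) in *.
  assert (HP : 0 < P) by apply Rpower_pos.
  pose proof (double_sum_bound (K3 a C0) (K1 a C0) P NA N2 HK3 HK1 (Rlt_le _ _ HP) HA HB) as D.
  rewrite !plus_IZR, !mult_IZR in D.
  set (x := IZR NA) in *. set (y := IZR N2) in *.
  assert (Hx : 1 <= x) by (apply IZR_le; lia).
  assert (Hy : 1 <= y) by (apply IZR_le; lia).
  set (mx := Rmax x y). set (mn := Rmin x y).
  assert (Hmx : x <= mx /\ y <= mx) by (split; [apply Rmax_l| apply Rmax_r]).
  assert (Hmn1 : 1 <= mn) by (unfold mn, Rmin; destruct Rle_dec; lra).
  assert (Hmn : Rmin (2 * x + 1) (2 * y + 1) <= 3 * mn) by (unfold mn, Rmin; repeat destruct Rle_dec; lra).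
  assert (Hmn0 : 0 <= Rmin (2 * x + 1) (2 * y + 1)) by (unfold Rmin; destruct Rle_dec; lra).
  set (Y := ln (2 + mx)).
  assert (HY1 : 1 <= Y).
  { unfold Y. rewrite <- (ln_exp 1). apply ln_le; [apply exp_pos|]. pose proof exp_le_3. lra. }
  assert (HY2 : ln (x + y) <= 2 * Y).
  { unfold Y. replace (2 * ln (2 + mx)) with (ln ((2 + mx) * (2 + mx))) by (rewrite ln_mult; lra).
    apply ln_le; nra. }
  assert (HL : 2 * (1 + ln (x + y)) <= 6 * Y) by lra.
  assert (T1 : K3 a C0 * ((2 * x + 1) * (2 * y + 1)) <= 9 * K3 a C0 * (x * y)).
  { assert ((2 * x + 1) * (2 * y + 1) <= 9 * (x * y)) by nra. nra. }
  assert (T2 : K1 a C0 * P * (2 * (1 + ln (x + y))) * Rmin (2 * x + 1) (2 * y + 1) <=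
               18 * K1 a C0 * (P * Y * mn)).
  { assert (0 <= K1 a C0 * P) by (apply Rmult_le_pos; lra).
    assert (0 <= 2 * (1 + ln (x + y))).
    { assert (0 <= ln (x+y)) by (rewrite <- ln_1; apply ln_le; lra). lra. }
    assert (K1 a C0 * P * (2 * (1 + ln (x + y))) * Rmin (2 * x + 1) (2 * y + 1) <=
            K1 a C0 * P * (6 * Y) * (3 * mn)).
    { apply Rmult_le_compat; try nra. }
    nra. }
  assert (0 <= P * Y * mn) by (apply Rmult_le_pos; [apply Rmult_le_pos|]; lra).
  assert (0 <= x * y) by nra.
  nra.
Qed.

Theorem lemma2p10 :
  forall (a C0 : R), 1 < a < 2 -> 0 < C0 ->
  exists C : R,
  forall (n n1 n2 n3 : nat) (m : R),
    (n1 <= n)%nat -> (n2 <= n)%nat -> (n3 <= n)%nat ->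
    let N1 := 2 ^ n1 in let N2 := 2 ^ n2 in let N3 := 2 ^ n3 in
    INR (cardS a m C0 (2 ^ Z.of_nat n) (2 ^ Z.of_nat n1)
                     (2 ^ Z.of_nat n2) (2 ^ Z.of_nat n3))%Z
    <= C * Rmin
         (Rpower N3 (2 - a) * ln (2 + Rmax N1 N2) * Rmin N1 N2 + N1 * N2)
         (Rpower N1 (2 - a) * ln (2 + Rmax N2 N3) * Rmin N2 N3 + N2 * N3).
Proof.
  intros a C0 [Ha Ha2] HC.
  exists (9 * K3 a C0 + 18 * K1 a C0).
  intros n n1 n2 n3 m _ _ _ N1 N2 N3.
  assert (Hp : forall k, (1 <= 2 ^ Z.of_nat k)%Z).
  { intros k. pose proof (Z.pow_pos_nonneg 2 (Z.of_nat k) ltac:(lia) ltac:(lia)). lia. }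
  assert (E1 : N1 = IZR (2 ^ Z.of_nat n1)) by (unfold N1; rewrite <- pow_IZR; reflexivity).
  assert (E2 : N2 = IZR (2 ^ Z.of_nat n2)) by (unfold N2; rewrite <- pow_IZR; reflexivity).
  assert (E3 : N3 = IZR (2 ^ Z.of_nat n3)) by (unfold N3; rewrite <- pow_IZR; reflexivity).
  rewrite E1, E2, E3.
  set (Z1 := (2 ^ Z.of_nat n1)%Z) in *. set (Z2 := (2 ^ Z.of_nat n2)%Z) in *.
  set (Z3 := (2 ^ Z.of_nat n3)%Z) in *. set (ZN := (2 ^ Z.of_nat n)%Z).
  set (X := INR (cardS a m C0 ZN Z1 Z2 Z3)).
  match goal with |- _ <= ?C * Rmin ?A ?B => assert (HA : X <= C * A); [|assert (HB : X <= C * B);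
     [|unfold Rmin; destruct Rle_dec; auto]] end.
  - apply (final_gen a C0 Z1 Z2 Z3 X Ha Ha2 HC (Hp n1) (Hp n2) (Hp n3)).
    eapply Rle_trans. { apply le_INR, (card_L1 a m C0 ZN Z1 Z2 Z3). }
    apply (L_gen_bound a m C0 Z1 Z2 Z3 _ (fun _ _ => []) (fun k1 k2 k3 => ((k1 - k2 + k3)%Z, k1, k2, k3)));
      auto; try apply Hp; reflexivity.
  - rewrite (Rmax_comm (IZR Z2)), (Rmin_comm (IZR Z2)), (Rmult_comm (IZR Z2)).
    apply (final_gen a C0 Z3 Z2 Z1 X Ha Ha2 HC (Hp n3) (Hp n2) (Hp n1)).
    eapply Rle_trans. { apply le_INR, (card_L2 a m C0 ZN Z1 Z2 Z3). }
    apply (L_gen_bound a m C0 Z3 Z2 Z1 _ (fun _ _ => []) (fun k3 k2 k1 => ((k1 - k2 + k3)%Z, k1, k2, k3)));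
      auto; try apply Hp; reflexivity.
Qed.
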